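(* Every functional $\Lambda$-system algebra over a set $\mathcal{X}$ that has unique fixed points and whose function $\Gamma$ permits reordering is composition-order invariant.
   Context: Let $\Lambda,\mathcal{X}$ be sets. For finite disjoint $\mathcal{I},\mathcal{O}\subseteq\Lambda$ let $\mathfrak{S}_{\mathcal{I},\mathcal{O}}$ be a set of functions $s:\mathcal{X}^{\mathcal{I}}\to\mathcal{X}^{\mathcal{O}}$ ($\mathcal{X}^{\mathcal{I}}$ = functions $\mathcal{I}\to\mathcal{X}$) and $\mathfrak{S}$ their union. For $s\in\mathfrak{S}_{\mathcal{I},\mathcal{O}}$, $i\in\mathcal{I}$, $o\in\mathcal{O}$, $\mathbf{x}\in\mathcal{X}^{\mathcal{I}\setminus\{i\}}$ let $\mathrm{Fix}(s,i,o,\mathbf{x}):=\{x_i\in\mathcal{X}\mid s(\mathbf{x}\cup\{(i,x_i)\})(o)=x_i\}$. Let $\Gamma$ assign to each $s\in\mathfrak{S}_{\mathcal{I},\mathcal{O}}$ a set of unordered pairs $\{i,o\}$, $i\in\mathcal{I}$, $o\in\mathcal{O}$, with $\mathrm{Fix}(s,i,o,\mathbf{x})\neq\emptyset$ for all $\mathbf{x}$, and let $\phi^s_{i,o}:\mathcal{X}^{\mathcal{I}\setminus\{i\}}\to\mathcal{X}$ satisfy $\phi^s_{i,o}(\mathbf{x})\in\mathrm{Fix}(s,i,o,\mathbf{x})$. Define $\lambda(s)=\mathcal{I}\cup\mathcal{O}$; $s_1\parallel s_2$ (for $s_j\in\mathfrak{S}_{\mathcal{I}_j,\mathcal{O}_j}$,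 all four index sets pairwise disjoint) by $(s_1\parallel s_2)(\mathbf{x})(o_j)=s_j(\mathbf{x}|_{\mathcal{I}_j})(o_j)$; and $\gamma_{i,o}(s)(\mathbf{x})=s(\mathbf{x}\cup\{(i,\phi^s_{i,o}(\mathbf{x}))\})|_{\mathcal{O}\setminus\{o\}}$ for $\{i,o\}\in\Gamma(s)$. If $\mathfrak{S}$ is closed under $\parallel,\gamma$ and $\{i,o\}\in\Gamma(s_1\parallel s_2)\iff\{i,o\}\in\Gamma(s_j)$ for $i,o\in\lambda(s_j)$, then $(\mathfrak{S},\lambda,\parallel,\Gamma,\gamma)$ is a functional $\Lambda$-system algebra over $\mathcal{X}$. It has unique fixed points if $|\mathrm{Fix}(s,i,o,\mathbf{x})|=1$ for all $s$, $\{i,o\}\in\Gamma(s)$, $\mathbf{x}$. $\Gamma$ permits reordering if for all $s$, $\{i,o\}\in\Gamma(s)$, $\{i',o'\}\in\Gamma(\gamma_{i,o}(s))$ we have $\{i',o'\}\in\Gamma(s)$ and $\{i,o\}\in\Gamma(\gamma_{i',o'}(s))$. The algebra is composition-order invariant if (i) $\Gamma$ permits reordering and $\gamma_{i',o'}(\gamma_{i,o}(s))=\gamma_{i,o}(\gamma_{i',o'}(s))$ in the situation just described, (ii) $\parallel$ is associative and commutative, and (iii) $\gamma_{i,o}(s_1)\parallel s_2=\gamma_{i,o}(s_1\parallel s_2)$ whenever $\lambda(s_1)\cap\lambda(s_2)=\emptyset$ and $\{i,o\}\in\Gamma(s_1)$. *)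

(* Defs.v *)
From mathcomp Require Import all_boot.
From mathcomp Require Import boolp classical_sets cardinality.

Set Implicit Arguments.
Unset Strict Implicit.
Unset Printing Implicit Defensive.

Local Open Scope classical_set_scope.

Section FunctionalSystems.
Variables (Lam X : Type).

Definition assign (A : set Lam) := {l : Lam | A l} -> X.

Record sys := Sys { sI : set Lam; sO : set Lam; sf : assign sI -> assign sO }.
Arguments sf : clear implicits.

Definition lam (s : sys) : set Lam := sI s `|` sO s.

Definition ext (I : set Lam) (i : Lam) (x : assign (I `\ i)) (xi : X)
  : assign I :=
  fun l => match pselect (sval l = i) with
           | left _ => xi
           | right h => x (exist _ (sval l) (conj (proj2_sig l) h))
           end.

(* Fix(s,i,o,x) as a predicate on X (o is assumed to be an output of s) *)
Definition Fix (s : sys) (i o : Lam) (x : assign (sI s `\ i)) (xi : X) : Prop :=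
  forall ho : sO s o, sf s (ext x xi) (exist _ o ho) = xi.
Arguments Fix : clear implicits.

Definition restr_minus (O : set Lam) (o : Lam) (y : assign O) : assign (O `\ o) :=
  fun l => y (exist _ (sval l) (proj1 (proj2_sig l))).

Definition restrU1 (A B : set Lam) (x : assign (A `|` B)) : assign A :=
  fun l => x (exist _ (sval l) (or_introl (proj2_sig l))).
Definition restrU2 (A B : set Lam) (x : assign (A `|` B)) : assign B :=
  fun l => x (exist _ (sval l) (or_intror (proj2_sig l))).

Definition orU2 (A B : set Lam) (l : Lam) (hU : (A `|` B) l) (hA : ~ A l) : B l :=
  match hU with
  | or_introl h1 => False_ind _ (hA h1)
  | or_intror h2 => h2
  end.

Definition par (s1 s2 : sys) : sys :=
  @Sys (sI s1 `|` sI s2) (sO s1 `|` sO s2)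
    (fun x l => match pselect (sO s1 (sval l)) with
                | left h => sf s1 (restrU1 x) (exist _ (sval l) h)
                | right h => sf s2 (restrU2 x)
                               (exist _ (sval l) (orU2 (proj2_sig l) h))
                end).

Definition gam (phi : forall (s : sys) (i o : Lam), assign (sI s `\ i) -> X)
  (s : sys) (i o : Lam) : sys :=
  @Sys (sI s `\ i) (sO s `\ o)
    (fun x => @restr_minus _ o (sf s (ext x (phi s i o x)))).

(* s1 || s2 is defined: the four index sets are pairwise disjoint
   (given that each s_j already has I_j, O_j disjoint) *)
Definition par_ok (s1 s2 : sys) : Prop := lam s1 `&` lam s2 = set0.

Definition functional_system_algebra (S : set sys) (Gam : sys -> Lam -> Lam -> Prop)
  (phi : forall (s : sys) (i o : Lam), assign (sI s `\ i) -> X) : Prop :=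
  [/\
      (forall s, S s ->
         [/\ finite_set (sI s), finite_set (sO s) & sI s `&` sO s = set0]),
      (forall s i o, S s -> Gam s i o ->
         [/\ sI s i, sO s o & forall x, exists xi, Fix s i o x xi]),
      (forall s i o, S s -> Gam s i o -> forall x, Fix s i o x (phi s i o x)),
      (forall s1 s2, S s1 -> S s2 -> par_ok s1 s2 -> S (par s1 s2)) /\
      (forall s i o, S s -> Gam s i o -> S (gam phi s i o)) &
      (forall s1 s2, S s1 -> S s2 -> par_ok s1 s2 ->
         (forall i o, lam s1 i -> lam s1 o -> (Gam (par s1 s2) i o <-> Gam s1 i o)) /\
         (forall i o, lam s2 i -> lam s2 o -> (Gam (par s1 s2) i o <-> Gam s2 i o)))].

Definition unique_fixed_points (S : set sys) (Gam : sys -> Lam -> Lam -> Prop) : Prop :=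
  forall s i o, S s -> Gam s i o ->
    forall x, exists xi, Fix s i o x xi /\ forall xi', Fix s i o x xi' -> xi' = xi.

Definition permits_reordering (S : set sys) (Gam : sys -> Lam -> Lam -> Prop)
  (phi : forall (s : sys) (i o : Lam), assign (sI s `\ i) -> X) : Prop :=
  forall s i o i' o', S s -> Gam s i o -> Gam (gam phi s i o) i' o' ->
    Gam s i' o' /\ Gam (gam phi s i' o') i o.

Definition composition_order_invariant (S : set sys) (Gam : sys -> Lam -> Lam -> Prop)
  (phi : forall (s : sys) (i o : Lam), assign (sI s `\ i) -> X) : Prop :=
  [/\
      permits_reordering S Gam phi /\
      (forall s i o i' o', S s -> Gam s i o -> Gam (gam phi s i o) i' o' ->
         gam phi (gam phi s i o) i' o' = gam phi (gam phi s i' o') i o),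
      (forall s1 s2 s3, S s1 -> S s2 -> S s3 ->
         par_ok s1 s2 -> par_ok s1 s3 -> par_ok s2 s3 ->
         par s1 (par s2 s3) = par (par s1 s2) s3) /\
      (forall s1 s2, S s1 -> S s2 -> par_ok s1 s2 -> par s1 s2 = par s2 s1) &
      (forall s1 s2 i o, S s1 -> S s2 -> par_ok s1 s2 -> Gam s1 i o ->
         par (gam phi s1 i o) s2 = gam phi (par s1 s2) i o)].

End FunctionalSystems.

(* Main.v *)
Require Import Defs.
From mathcomp Require Import all_boot.
From mathcomp Require Import boolp classical_sets cardinality.
Set Implicit Arguments.
Local Open Scope classical_set_scope.

Section H.
Variables (Lam X : Type).

Definition eqa (A B : set Lam) (x : assign X A) (y : assign X B) :=
  forall a b, sval a = sval b -> x a = y b.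

Lemma sig_eq (A : set Lam) (a b : {l | A l}) : sval a = sval b -> a = b.
Proof. case: a b => [a pa] [b pb] /= eab; subst b; congr exist; exact: Prop_irrelevance. Qed.

Lemma sys_ext (I1 O1 : set Lam) (f1 : assign X I1 -> assign X O1) (I2 O2 : set Lam)
   (f2 : assign X I2 -> assign X O2) :
  I1 = I2 -> O1 = O2 ->
  (forall x1 x2, eqa x1 x2 -> forall l1 l2, sval l1 = sval l2 -> f1 x1 l1 = f2 x2 l2) ->
  @Sys Lam X I1 O1 f1 = @Sys Lam X I2 O2 f2.
Proof.
move=> eI eO; subst I2 O2 => H; congr Sys; apply: funext => x; apply: funext => l.
apply: H => // a b eab; congr x; exact: sig_eq.
Qed.

Lemma sf_congr (s : sys Lam X) (x y : assign X (sI s)) (a b : {l | sO s l}) :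
  x = y -> sval a = sval b -> sf (s:=s) x a = sf (s:=s) y b.
Proof. by move=> -> /sig_eq ->. Qed.

Lemma setE (A B : set Lam) : (forall l, A l <-> B l) -> A = B.
Proof. move=> H; apply: funext => l; exact: propext. Qed.

Lemma par_comm (s1 s2 : sys Lam X) : par_ok s1 s2 -> par s1 s2 = par s2 s1.
Proof.
move=> ok; apply: sys_ext.
- by apply: setE => l; split => -[]; [right|left|right|left].
- by apply: setE => l; split => -[]; [right|left|right|left].
move=> x1 x2 Hx [v p] [w q] /= e; subst w.
case: pselect => h1; case: pselect => h2.
- exfalso; have : (lam s1 `&` lam s2) v by split; right.
  by rewrite ok.
- f_equal; [apply: funext => m; by apply: Hx | exact: sig_eq].
- f_equal; [apply: funext => m; by apply: Hx | exact: sig_eq].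
- exfalso; case: p => //.
Qed.

Lemma par_assoc (s1 s2 s3 : sys Lam X) : par s1 (par s2 s3) = par (par s1 s2) s3.
Proof.
apply: sys_ext.
- by apply: setE => l; split => [[|[]]|[[]|]]; rewrite /setU /=; tauto.
- by apply: setE => l; split => [[|[]]|[[]|]]; rewrite /setU /=; tauto.
move=> x1 x2 Hx [v p] [w q] /= e; subst w.
repeat case: pselect => ? /=.
all: try (by apply: sf_congr => //; apply: funext => m; by apply: Hx).
all: try (exfalso; unfold setU in *; simpl in *; tauto).
Qed.

Lemma fix_uniq S Gam (ufp : unique_fixed_points S Gam) (s : sys Lam X) i o (x : assign X (sI s `\ i)) (xi : X) :
  S s -> Gam s i o -> @Fix Lam X s i o x xi -> forall xi', @Fix Lam X s i o x xi' -> xi = xi'.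
Proof.
move=> Ss G F1 xi' F2; have [z [_ U]] := ufp _ _ _ Ss G x.
by rewrite (U _ F1) (U _ F2).
Qed.

Lemma part3 (S : set (sys Lam X)) (Gam : sys Lam X -> Lam -> Lam -> Prop)
  (phi : forall (s : sys Lam X) (i o : Lam), assign X (sI s `\ i) -> X) : functional_system_algebra S Gam phi -> unique_fixed_points S Gam ->
  forall s1 s2 i o, S s1 -> S s2 -> par_ok s1 s2 -> Gam s1 i o ->
  par (gam phi s1 i o) s2 = gam phi (par s1 s2) i o.
Proof.
move=> [H1 H2 H3 [Hpar Hgam] Hcomp] ufp s1 s2 i o S1 S2 ok G.
have [Ii Oo _] := H2 _ _ _ S1 G.
have ni : ~ sI s2 i.
  move=> h; have H : (lam s1 `&` lam s2) i by split; left.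
  by rewrite ok in H.
have no : ~ sO s2 o.
  move=> h; have H : (lam s1 `&` lam s2) o by split; right.
  by rewrite ok in H.
have Sp := Hpar _ _ S1 S2 ok.
have Gp : Gam (par s1 s2) i o.
  apply: (proj2 (proj1 (Hcomp _ _ S1 S2 ok) i o _ _)) => //; [left|right] => //.
apply: sys_ext.
- apply: setE => l; rewrite /setD /setU /set1 /=; split.
    by case=> [[a b]|a]; split; auto; move=> e; subst.
  by case=> [[a|a] b]; auto.
- apply: setE => l; rewrite /setD /setU /set1 /=; split.
    by case=> [[a b]|a]; split; auto; move=> e; subst.
  by case=> [[a|a] b]; auto.
move=> x1 x2 Hx [v p] [w q] /= e; subst w.
have Hf : forall u, ext (restrU1 x1) u = restrU1 (ext x2 u).
  move=> u; apply: funext => m; rewrite /ext /restrU1 /=.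
  case: pselect => // h; by apply: Hx.
have Ephi : phi (par s1 s2) i o x2 = phi s1 i o (restrU1 x1).
  apply: (fix_uniq ufp S1 G); last exact: H3.
  move=> ho; rewrite Hf.
  have := H3 _ _ _ Sp Gp x2 (or_introl ho).
  rewrite /=; case: pselect => // h.
  by rewrite (Prop_irrelevance h ho).
rewrite /restr_minus /=.
case: pselect => h1; case: pselect => h2.
- apply: sf_congr => //; rewrite -Hf Ephi //.
- by case: h1.
- by exfalso; case: q => _ qo; apply: h1; split.
- apply: sf_congr => //; apply: funext => m; rewrite /restrU2 /ext /=.
  case: pselect => h; first by case: (ni); rewrite -h; case: m {h} => /=.
  by apply: Hx.
Qed.

Lemma part1 (S : set (sys Lam X)) (Gam : sys Lam X -> Lam -> Lam -> Prop)
  (phi : forall (s : sys Lam X) (i o : Lam), assign X (sI s `\ i) -> X) :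
  functional_system_algebra S Gam phi -> unique_fixed_points S Gam ->
  permits_reordering S Gam phi ->
  forall s i o i' o', S s -> Gam s i o -> Gam (gam phi s i o) i' o' ->
         gam phi (gam phi s i o) i' o' = gam phi (gam phi s i' o') i o.
Proof.
move=> [H1 H2 H3 [Hpar Hgam] Hcomp] ufp pr s i o i' o' Ss G G'.
have [G2 G2'] := pr _ _ _ _ _ Ss G G'.
have Sg := Hgam _ _ _ Ss G. have Sg' := Hgam _ _ _ Ss G2.
have [Ii Oo _] := H2 _ _ _ Ss G.
have [[Ii' nii] [Oo' noo] _] := H2 _ _ _ Sg G'.
apply: sys_ext.
- by apply: setE => l; rewrite /setD /set1 /=; tauto.
- by apply: setE => l; rewrite /setD /set1 /=; tauto.
move=> x1 x2 Hx [v p] [w q] /= e; subst w.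
have F : forall u w, ext (I:=sI s) (i:=i) (ext (I:= sI s `\ i) (i:=i') x1 u) w
   = ext (I:=sI s) (i:=i') (ext (I:=sI s `\ i') (i:=i) x2 w) u.
  move=> u w; apply: funext => m; rewrite /ext /=.
  repeat case: pselect => ? //=; try congruence.
  by apply: Hx.
set a := phi (gam phi s i o) i' o' x1.
set a' := phi (gam phi s i' o') i o x2.
set b' := phi s i' o' (ext (I:=sI s `\ i') (i:=i) x2 a').
have E1 : phi s i o (ext (I:=sI s `\ i) (i:=i') x1 b') = a'.
  symmetry; apply: (fix_uniq ufp Ss G); last exact: H3.
  move=> ho; rewrite F.
  have := H3 _ _ _ Sg' G2' x2 (conj ho (fun e => noo (esym e))).
  rewrite /= /restr_minus /= => E; apply: eq_trans E; by apply: sf_congr.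
have E2 : b' = a.
  apply: (fix_uniq ufp Sg G'); last exact: H3.
  move=> ho; rewrite /= /restr_minus /= E1 F.
  have := H3 _ _ _ Ss G2 (ext x2 a') (proj1 ho).
  move=> E; apply: eq_trans E; by apply: sf_congr.
rewrite /restr_minus /= -E2 E1 F.
by apply: sf_congr.
Qed.
End H.

Theorem theorem4p7 (Lam X : Type) (S : set (sys Lam X))
  (Gam : sys Lam X -> Lam -> Lam -> Prop)
  (phi : forall (s : sys Lam X) (i o : Lam), assign X (sI s `\ i) -> X) :
  functional_system_algebra S Gam phi ->
  unique_fixed_points S Gam ->
  permits_reordering S Gam phi ->
  composition_order_invariant S Gam phi.
Proof.
move=> fsa ufp pr; split.
- split; first exact: pr.
  move=> s i o i' o'; exact: (part1 fsa ufp pr).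
- split => *; [exact: par_assoc | exact: par_comm].
- move=> s1 s2 i o; exact: (part3 fsa ufp).
Qed.
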